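(* Let $\mathbf{v}\in K(\mathbb{F}_e)$ be a Chern character of positive rank, and assume $\Delta(\mathbf{v})\geq 1/4$ if $e=0$, $\Delta(\mathbf{v})\geq 1/8$ if $e=1$, and $\Delta(\mathbf{v})\geq 0$ if $e\geq 2$. Then there exists a line bundle $L$ on $\mathbb{F}_e$ such that $\chi(\mathbf{v}(-L))\geq 0$, $\chi(\mathbf{v}(-L-E))\leq 0$, $\chi(\mathbf{v}(-L-F))\leq 0$, and $\chi(\mathbf{v}(-L-E-F))\leq 0$.
   Context: $\mathbb{F}_e=\mathbb{P}(\mathcal{O}_{\mathbb{P}^1}\oplus\mathcal{O}_{\mathbb{P}^1}(e))$, $e\ge 0$, with fiber class $F$ and section class $E$, $E^2=-e$, $F^2=0$, $E\cdot F=1$. For a character of positive rank $r$: $\nu=c_1/r$, $\Delta=\frac12\nu^2-\mathrm{ch}_2/r$; $\mathbf{v}(D)=\mathbf{v}\cdot\mathrm{ch}\,\mathcal{O}(D)$. *)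

(* Defs.v *)
From mathcomp Require Import all_boot all_order all_algebra.
Set Implicit Arguments. Unset Strict Implicit. Unset Printing Implicit Defensive.
Import Order.TTheory GRing.Theory Num.Theory.
Local Open Scope ring_scope.

(* Pic(F_e) = Z E + Z F; a divisor class a E + b F is the pair (a, b). *)
(* Intersection form: E^2 = -e, F^2 = 0, E.F = 1. *)
Definition idot (e : nat) (a b c d : rat) : rat :=
  - (e%:R) * a * c + a * d + b * c.

Record chern := Chern { ch_r : rat; ch_a : rat; ch_b : rat; ch_2 : rat }.

(* An element of K(F_e), given by its rank r, first Chern class c1 = aE+bF
   and second Chern class c2 (all integers); K(F_e) is free on these. *)
Record Kclass := Kcl { K_r : int; K_a : int; K_b : int; K_c2 : int }.

Definition ch (e : nat) (v : Kclass) : chern :=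
  Chern (K_r v)%:~R (K_a v)%:~R (K_b v)%:~R
    (idot e (K_a v)%:~R (K_b v)%:~R (K_a v)%:~R (K_b v)%:~R / 2 - (K_c2 v)%:~R).

(* v(D) = v . ch O(D), D = x E + y F. *)
Definition twist (e : nat) (v : chern) (x y : rat) : chern :=
  Chern (ch_r v) (ch_a v + ch_r v * x) (ch_b v + ch_r v * y)
    (ch_2 v + idot e (ch_a v) (ch_b v) x y + ch_r v * idot e x y x y / 2).

(* Riemann-Roch: chi(v) = r chi(O) + c1.(-K)/2 + ch2, with chi(O) = 1 and
   -K = 2E + (e+2)F. *)
Definition chi (e : nat) (v : chern) : rat :=
  ch_r v + idot e (ch_a v) (ch_b v) 2 (e%:R + 2) / 2 + ch_2 v.

Definition disc (e : nat) (v : chern) : rat :=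
  idot e (ch_a v / ch_r v) (ch_b v / ch_r v) (ch_a v / ch_r v) (ch_b v / ch_r v) / 2
  - ch_2 v / ch_r v.

(* Main.v *)
Require Import Defs.
From mathcomp Require Import all_boot all_order all_algebra.
From mathcomp Require Import ring lra.
Import Order.TTheory GRing.Theory Num.Theory.
Local Open Scope ring_scope.

Definition G (e : nat) (u w : rat) := u * w - e%:R * u * (u - 1) / 2.

Lemma chi_twist e (v : chern) X Y : ch_r v != 0 ->
  chi e (twist e v X Y) =
  ch_r v * (G e (1 + ch_a v / ch_r v + X) (1 + ch_b v / ch_r v + Y) - disc e v).
Proof.
case: v => r a b c /= r0.
rewrite /chi /twist /disc /idot /G /=. field. exact: r0.
Qed.

Lemma key (e : nat) (u th D : rat) :
  0 < u -> u <= 1 -> 0 <= th -> th < 1 -> 0 <= D ->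
  u * (1 - u) * (1 - e%:R / 2) <= D ->
  let w := D / u - e%:R * (1 - u) / 2 + th in
  [/\ 0 <= G e u w - D, G e u (w - 1) - D <= 0,
      G e (u - 1) w - D <= 0 & G e (u - 1) (w - 1) - D <= 0].
Proof.
move=> u0 u1 t0 t1 D0 HD w.
have un : u != 0 by rewrite gt_eqF.
have E1 : G e u w - D = u * th by rewrite /w /G; field.
have E2 : G e u (w - 1) - D = u * (th - 1) by rewrite /w /G; field.
have E3 : G e (u - 1) w - D = - ((1 - u) * (D / u + e%:R / 2 + th)) - D
  by rewrite /w /G; field.
have E4 : G e (u - 1) (w - 1) - D =
   (u * (1 - u) * (1 - e%:R / 2) - u * (1 - u) * th - D) / u
  by rewrite /w /G; field.
have e0 : 0 <= e%:R :> rat by rewrite ler0n.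
have Du : 0 <= D / u by rewrite divr_ge0 // ltW.
split.
- rewrite E1; nra.
- rewrite E2; nra.
- rewrite E3; nra.
- rewrite E4; apply: mulr_le0_ge0; last by rewrite invr_ge0 ltW.
  have : 0 <= u * (1 - u) * th by rewrite !mulr_ge0 // ?subr_ge0 // ltW.
  lra.
Qed.

Lemma Dbound (e : nat) (u D : rat) : 0 < u -> u <= 1 ->
  (e = 0%N -> 1 / 4 <= D) -> (e = 1%N -> 1 / 8 <= D) -> ((2 <= e)%N -> 0 <= D) ->
  0 <= D /\ u * (1 - u) * (1 - e%:R / 2) <= D.
Proof.
move=> u0 u1.
case: e => [|[|e]] H0 H1 H2.
- have h := H0 erefl; split; first lra.
  have : u * (1 - u) <= 1/4 by have := sqr_ge0 (u - 1/2); rewrite expr2; nra.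
  rewrite mul0r subr0 mulr1; lra.
- have h := H1 erefl; split; first lra.
  have : u * (1 - u) <= 1/4 by have := sqr_ge0 (u - 1/2); rewrite expr2; nra.
  have -> : (1 - 1%:R / 2 : rat) = 1/2 by rewrite /=; field.
  lra.
- have h := H2 erefl; split => //.
  have : 1 - (e.+2)%:R / 2 <= 0 :> rat.
    rewrite -addn2 natrD; have : 0 <= e%:R :> rat by rewrite ler0n. lra.
  have : 0 <= u * (1 - u) by rewrite mulr_ge0 // ?subr_ge0 // ltW.
  nra.
Qed.

Theorem lemma4p5 (e : nat) (w : Kclass) :
  let v := ch e w in
  0 < ch_r v ->
  (e = 0%N -> 1 / 4 <= disc e v) ->
  (e = 1%N -> 1 / 8 <= disc e v) ->
  ((2 <= e)%N -> 0 <= disc e v) ->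
  exists x y : int,
    0 <= chi e (twist e v (- x%:~R) (- y%:~R)) /\
    chi e (twist e v (- x%:~R - 1) (- y%:~R)) <= 0 /\
    chi e (twist e v (- x%:~R) (- y%:~R - 1)) <= 0 /\
    chi e (twist e v (- x%:~R - 1) (- y%:~R - 1)) <= 0.
Proof.
move=> v r0 H0 H1 H2.
set r := ch_r v in r0 *.
have rn : r != 0 by rewrite gt_eqF.
set D := disc e v in H0 H1 H2 *.
set al := ch_a v / r.
set x := Num.ceil al.
set u := 1 + al - x%:~R.
have [cx1 cx2] : (x - 1)%:~R < al /\ al <= x%:~R :> rat.
  by move: (ceil_itv al) => /andP[].
have u0 : 0 < u by rewrite /u; move: cx1; rewrite intrD /=; lra.
have u1 : u <= 1 by rewrite /u; lra.
have e0 : 0 <= e%:R :> rat by rewrite ler0n.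
have [D0 HD] : 0 <= D /\ u * (1 - u) * (1 - e%:R / 2) <= D
  by apply: Dbound.
set W0 := D / u - e%:R * (1 - u) / 2.
set y := Num.floor (ch_b v / r - W0 + 1).
set th := 1 + ch_b v / r - y%:~R - W0.
have [fy1 fy2] : y%:~R <= ch_b v / r - W0 + 1 /\ ch_b v / r - W0 + 1 < (y + 1)%:~R :> rat.
  by move: (floor_itv (ch_b v / r - W0 + 1)) => /andP[].
have t0 : 0 <= th by rewrite /th; lra.
have t1 : th < 1 by rewrite /th; move: fy2; rewrite intrD /=; lra.
have [K1 K2 K3 K4] := @key e u th D u0 u1 t0 t1 D0 HD.
have Ew : 1 + ch_b v / r + - y%:~R = D / u - e%:R * (1 - u) / 2 + th
  by rewrite /th /W0; ring.
have Ew1 : 1 + ch_b v / r + (- y%:~R - 1) = D / u - e%:R * (1 - u) / 2 + th - 1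
  by rewrite /th /W0; ring.
have Eu : 1 + ch_a v / r + - x%:~R = u by rewrite /u /al; ring.
have Eu1 : 1 + ch_a v / r + (- x%:~R - 1) = u - 1 by rewrite /u /al; ring.
exists x, y.
rewrite !chi_twist // -/r Ew Ew1 Eu Eu1 -/D.
split; first by rewrite mulr_ge0 // ltW.
split; first by rewrite pmulr_rle0.
split; first by rewrite pmulr_rle0.
by rewrite pmulr_rle0.
Qed.
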